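(* Let $\kappa$ be a regular uncountable cardinal. If $\kappa$ carries a uniform normal 2-precipitous ideal, then $\kappa\to_{hc}[\kappa]^2_{\omega,2}$.
   Context: An ideal $I$ on $\kappa$ is uniform if it contains every subset of $\kappa$ of size $<\kappa$; it is normal if for every sequence $\langle X_\alpha:\alpha<\kappa\rangle$ of members of $I$, the diagonal union $\{\beta<\kappa:\exists\alpha<\beta\ (\beta\in X_\alpha)\}$ is in $I$. The game $G_I$: Players Empty and Nonempty alternate, Empty moving first, producing a coordinatewise $\subseteq$-decreasing sequence $\langle (A_n,B_n):n\in\omega\rangle$ of pairs of $I$-positive sets; Nonempty wins iff there exist $\alpha<\beta$ with $\alpha\in\bigcap_n A_n$, $\beta\in\bigcap_n B_n$. $I$ is 2-precipitous if Empty has no winning strategy in $G_I$. A graph $(X,E)$ is highly connected if for every $Y\subseteq X$ with $|Y|<|X|$ the induced subgraph on $X\setminus Y$ is connected. For $k\in\omega$, $\kappa\to_{hc}[\kappa]^2_{\omega,k}$ means: for every $c:[\kappa]^2\to\omega$ there exist $H\in[\kappa]^\kappa$ and $K\in[\omega]^k$ such that $(H,c^{-1}(K)\cap[H]^2)$ is highly connected. *)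

(* Defs.v *)
(* A cardinal kappa is represented by a type K carrying a
   strict well-order [lt] of order type kappa (an initial ordinal).
   Subsets of kappa are predicates K -> Prop. *)
From Stdlib Require Import List Relations.

Section Defs.
Variable K : Type.
Variable lt : K -> K -> Prop.

Definition subset_of (A B : K -> Prop) : Prop := forall x, A x -> B x.

Definition card_le (A B : K -> Prop) : Prop :=
  exists f : K -> K, (forall x, A x -> B (f x)) /\
    (forall x y, A x -> A y -> f x = f y -> x = y).

Definition card_lt (A B : K -> Prop) : Prop := ~ card_le B A.

Definition fullK : K -> Prop := fun _ => True.

Definition regular_uncountable_cardinal : Prop :=
  well_founded lt /\
  (forall x y z, lt x y -> lt y z -> lt x z) /\
  (forall x y, lt x y \/ x = y \/ lt y x) /\
  (* initial ordinal: every proper initial segment has size < kappa *)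
  (forall x, card_lt (fun y => lt y x) fullK) /\
  ~ (exists f : K -> nat, forall x y, f x = f y -> x = y) /\
  (forall X, card_lt X fullK -> exists b, forall x, X x -> lt x b).

Definition is_ideal (I : (K -> Prop) -> Prop) : Prop :=
  I (fun _ => False) /\
  (forall X Y, I Y -> subset_of X Y -> I X) /\
  (forall X Y, I X -> I Y -> I (fun x => X x \/ Y x)) /\
  ~ I fullK.

Definition uniform (I : (K -> Prop) -> Prop) : Prop :=
  forall X, card_lt X fullK -> I X.

Definition normal (I : (K -> Prop) -> Prop) : Prop :=
  forall F : K -> (K -> Prop), (forall a, I (F a)) ->
    I (fun b => exists a, lt a b /\ F a b).

Definition positive (I : (K -> Prop) -> Prop) (X : K -> Prop) : Prop := ~ I X.

(* The game G_I.  A play is p : nat -> (A_n, B_n); Empty plays the even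
   moves p (2n), Nonempty plays the odd moves p (2n+1). *)
Definition move := ((K -> Prop) * (K -> Prop))%type.

Definition legal_move (I : (K -> Prop) -> Prop) (p : nat -> move) (m : nat) : Prop :=
  positive I (fst (p m)) /\ positive I (snd (p m)) /\
  match m with
  | 0 => True
  | S m' => subset_of (fst (p m)) (fst (p m')) /\ subset_of (snd (p m)) (snd (p m'))
  end.

Definition strategy := list move -> move.

Definition follows (sigma : strategy) (p : nat -> move) : Prop :=
  forall n, p (2 * n) = sigma (map p (seq 0 (2 * n))).

Definition nonempty_wins_play (p : nat -> move) : Prop :=
  exists a b, lt a b /\ (forall n, fst (p n) a) /\ (forall n, snd (p n) b).

Definition empty_winning (I : (K -> Prop) -> Prop) (sigma : strategy) : Prop :=
  forall p, follows sigma p ->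
    (forall n, (forall j, j < n -> legal_move I p (2 * j + 1)) -> legal_move I p (2 * n)) /\
    ((forall j, legal_move I p (2 * j + 1)) -> ~ nonempty_wins_play p).

Definition two_precipitous (I : (K -> Prop) -> Prop) : Prop :=
  ~ exists sigma, empty_winning I sigma.

Definition connected (V : K -> Prop) (E : K -> K -> Prop) : Prop :=
  forall x y, V x -> V y ->
    clos_refl_trans K (fun a b => V a /\ V b /\ E a b) x y.

Definition highly_connected (X : K -> Prop) (E : K -> K -> Prop) : Prop :=
  forall Y, subset_of Y X -> card_lt Y X ->
    connected (fun x => X x /\ ~ Y x) E.

(* c : [kappa]^2 -> omega is represented by c : K -> K -> nat, the colour of
   {a, b} with a < b being c a b.  Edge set c^{-1}(S) on K. *)
Definition colour_graph (c : K -> K -> nat) (S : nat -> Prop) (x y : K) : Prop :=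
  (lt x y /\ S (c x y)) \/ (lt y x /\ S (c y x)).

Definition hc_arrow (k : nat) : Prop :=
  forall c : K -> K -> nat,
    exists (H : K -> Prop) (S : list nat),
      card_le fullK H /\ NoDup S /\ length S = k /\
      highly_connected H (colour_graph c (fun n => In n S)).
End Defs.

(* Main.v *)
Require Import Defs.
From Stdlib Require Import List Relations Classical ClassicalEpsilon Lia Arith.
Import ListNotations.

Lemma ideal_down K (J : (K -> Prop) -> Prop) (Hid : is_ideal K J) (X Y : K -> Prop) :
  J Y -> (forall x, X x -> Y x) -> J X.
Proof. destruct Hid as [_ [H _]]. intros. eapply H; eauto. Qed.

Lemma ideal_empty K J (Hid : is_ideal K J) : J (fun _ : K => False).
Proof. apply Hid. Qed.

Lemma ideal_union K J (Hid : is_ideal K J) (X Y : K -> Prop) :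
  J X -> J Y -> J (fun x => X x \/ Y x).
Proof. destruct Hid as [_ [_ [H _]]]. auto. Qed.

Lemma pos_ne K J (Hid : is_ideal K J) (X : K -> Prop) : ~ J X -> exists x, X x.
Proof.
  intros HX. apply NNPP. intro Hn. apply HX.
  apply (ideal_down K J Hid X (fun _ => False)). apply Hid.
  intros x Hx. apply Hn. eauto.
Qed.

Lemma pos_minus K J (Hid : is_ideal K J) (X Y : K -> Prop) :
  ~ J X -> J Y -> ~ J (fun x => X x /\ ~ Y x).
Proof.
  intros HX HY HZ. apply HX.
  apply (ideal_down _ _ Hid X (fun x => (X x /\ ~ Y x) \/ Y x)).
  - apply ideal_union; auto.
  - intros x Hx. destruct (classic (Y x)); auto.
Qed.

Definition Dens K (lt : K -> K -> Prop) (J : (K -> Prop) -> Prop) (c : K -> K -> nat)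
  (A B : K -> Prop) (k : nat) : Prop :=
  forall A' B' : K -> Prop, (forall x, A' x -> A x) -> (forall x, B' x -> B x) ->
    ~ J A' -> ~ J B' -> exists a b, A' a /\ B' b /\ lt a b /\ c a b = k.

Lemma lemX K lt J c (Hid : is_ideal K J) (Hn : normal K lt J) A B k (A' B' : K -> Prop) :
  Dens K lt J c A B k -> (forall x, A' x -> A x) -> (forall x, B' x -> B x) -> ~ J B' ->
  J (fun x => A' x /\ J (fun b => lt x b /\ c x b = k /\ B' b)).
Proof.
  intros HD HA HB HB'.
  apply NNPP; intro HXs.
  pose (F := fun a b => (A' a /\ J (fun b => lt a b /\ c a b = k /\ B' b)) /\ lt a b /\ c a b = k /\ B' b).
  assert (HF : forall a, J (F a)).
  { intro a. destruct (classic (A' a /\ J (fun b => lt a b /\ c a b = k /\ B' b))) as [Ha|Ha].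
    - apply (ideal_down _ _ Hid (F a) (fun b => lt a b /\ c a b = k /\ B' b)).
      exact (proj2 Ha). intros b [_ Hb]; exact Hb.
    - apply (ideal_down _ _ Hid (F a) (fun _ => False)). apply Hid.
      intros b [Hb _]. exact (Ha Hb). }
  pose proof (Hn F HF) as HN.
  destruct (HD (fun x => A' x /\ J (fun b => lt x b /\ c x b = k /\ B' b))
               (fun b => B' b /\ ~ (exists a, lt a b /\ F a b)))
    as [a [b [Ha [[Hb Hnb] [Hab Hc]]]]].
  - intros x [Hx _]; auto.
  - intros x [Hx _]; auto.
  - exact HXs.
  - apply pos_minus; auto.
  - apply Hnb. exists a. split; auto. unfold F. auto.
Qed.

Lemma legal_odd K J (p : nat -> move K) m : legal_move K J p (2*m+1) ->
  ~ J (fst (p (2*m+1))) /\ ~ J (snd (p (2*m+1))) /\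
  (forall x, fst (p (2*m+1)) x -> fst (p (2*m)) x) /\
  (forall x, snd (p (2*m+1)) x -> snd (p (2*m)) x).
Proof.
  intro H. replace (2*m+1) with (S (2*m)) in * by lia.
  destruct H as [h1 [h2 [h3 h4]]]. auto.
Qed.

Lemma lemG K lt J c (Hid : is_ideal K J) (H2 : two_precipitous K lt J) (A0 B0 : K -> Prop) :
  ~ J A0 -> ~ J B0 -> exists A B k, (forall x, A x -> A0 x) /\ (forall x, B x -> B0 x) /\
    ~ J A /\ ~ J B /\ Dens K lt J c A B k.
Proof.
  intros HA0 HB0. apply NNPP; intro Hno.
  pose (P := fun (m0 : move K) n (m : move K) => (forall x, fst m x -> fst m0 x) /\
     (forall x, snd m x -> snd m0 x) /\ ~ J (fst m) /\ ~ J (snd m) /\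
     (forall a b, fst m a -> snd m b -> lt a b -> c a b <> n)).
  assert (Hsh : forall (m0 : move K) n, (forall x, fst m0 x -> A0 x) -> (forall x, snd m0 x -> B0 x) ->
     ~ J (fst m0) -> ~ J (snd m0) -> exists m, P m0 n m).
  { intros m0 n HX HY HXp HYp. apply NNPP; intro Hn. apply Hno.
    exists (fst m0), (snd m0), n. repeat split; auto.
    intros A' B' HA' HB' HA'p HB'p. apply NNPP; intro He. apply Hn.
    exists (A', B'). unfold P; simpl. repeat split; auto.
    intros a b Ha Hb Hab Hc. apply He. exists a, b. auto. }
  pose (shrink := fun (m0 : move K) n => epsilon (inhabits m0) (P m0 n)).
  assert (Hspec : forall m0 n, (forall x, fst m0 x -> A0 x) -> (forall x, snd m0 x -> B0 x) ->
     ~ J (fst m0) -> ~ J (snd m0) -> P m0 n (shrink m0 n)).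
  { intros m0 n h1 h3 h4 h5. unfold shrink. apply epsilon_spec. apply Hsh; auto. }
  pose (sigma := fun h : list (move K) => if Nat.eqb (length h) 0 then (A0, B0)
                   else shrink (last h (A0, B0)) (pred (Nat.div2 (length h)))).
  apply H2. exists sigma. intros p Hf.
  assert (Hp0 : p 0 = (A0, B0)) by exact (Hf 0).
  assert (HpS : forall m, p (2 * S m) = shrink (p (2 * m + 1)) m).
  { intro m. rewrite Hf. unfold sigma. rewrite length_map, length_seq.
    assert (E1 : Nat.eqb (2 * S m) 0 = false) by (apply Nat.eqb_neq; lia).
    rewrite E1, Nat.div2_double. simpl pred.
    replace (2 * S m) with (S (2*m+1)) by lia. rewrite seq_S, map_app. simpl map at 2. rewrite last_last.
    reflexivity. }
  assert (Hinv : forall n, (forall j, j < n -> legal_move K J p (2*j+1)) ->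
     (forall x, fst (p (2*n)) x -> A0 x) /\ (forall x, snd (p (2*n)) x -> B0 x) /\
     ~ J (fst (p (2*n))) /\ ~ J (snd (p (2*n)))).
  { induction n as [|m IH]; intros Hj.
    - simpl (2*0). rewrite Hp0. simpl. repeat split; auto.
    - destruct (IH (fun j Hj' => Hj j ltac:(lia))) as [Ha [Hb [Hc Hd]]].
      destruct (legal_odd K J p m (Hj m ltac:(lia))) as [l1 [l2 [l3 l4]]].
      rewrite HpS.
      destruct (Hspec (p (2*m+1)) m (fun x h => Ha x (l3 x h)) (fun x h => Hb x (l4 x h)) l1 l2)
        as [s1 [s2 [s3 [s4 _]]]].
      repeat split; auto. }
  split.
  - intros n Hj. destruct n as [|m].
    + destruct (Hinv 0 Hj) as [_ [_ [h1 h2]]].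
      unfold legal_move. split; [exact h1 | split; [exact h2 | exact Logic.I]].
    + destruct (Hinv (S m) Hj) as [_ [_ [h1 h2]]].
      destruct (legal_odd K J p m (Hj m ltac:(lia))) as [l1 [l2 [l3 l4]]].
      destruct (Hinv m (fun j H => Hj j ltac:(lia))) as [i1 [i2 _]].
      destruct (Hspec (p (2*m+1)) m (fun x h => i1 x (l3 x h)) (fun x h => i2 x (l4 x h)) l1 l2)
        as [s1 [s2 _]].
      unfold legal_move. split; [exact h1 | split; [exact h2 |]].
      rewrite HpS. replace (2 * S m) with (S (2*m+1)) by lia.
      split; [exact s1 | exact s2].
  - intros Hall [a [b [Hab [Ha Hb]]]].
    pose (m := c a b).
    destruct (legal_odd K J p m (Hall m)) as [l1 [l2 [l3 l4]]].
    destruct (Hinv m (fun j _ => Hall j)) as [i1 [i2 _]].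
    destruct (Hspec (p (2*m+1)) m (fun x h => i1 x (l3 x h)) (fun x h => i2 x (l4 x h)) l1 l2)
      as [_ [_ [_ [_ Hne]]]].
    apply (Hne a b).
    + rewrite <- HpS; apply Ha.
    + rewrite <- HpS; apply Hb.
    + exact Hab.
    + reflexivity.
Qed.

Lemma crt_sym K (R : K -> K -> Prop) (HR : forall a b, R a b -> R b a) x y :
  clos_refl_trans K R x y -> clos_refl_trans K R y x.
Proof.
  induction 1; [apply rt_step; auto | apply rt_refl | eapply rt_trans; eauto].
Qed.

Lemma crit K lt J c (Hid : is_ideal K J) (Hn : normal K lt J) (Hu : uniform K J)
  (A B : K -> Prop) i k :
  ~ J A -> ~ J B -> Dens K lt J c A B k -> Dens K lt J c B A i ->
  exists (H : K -> Prop) (S : list nat),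
      card_le K (fullK K) H /\ NoDup S /\ length S = 2 /\
      highly_connected K H (colour_graph K lt c (fun n => In n S)).
Proof.
  intros HA HB HDk HDi.
  assert (HS : exists Sc : list nat, NoDup Sc /\ length Sc = 2 /\ In i Sc /\ In k Sc).
  { destruct (Nat.eq_dec i k) as [e|ne].
    - exists [i; S i]. subst. repeat split; simpl; auto.
      constructor; [simpl; intros [h|h]; [lia|auto] | constructor; [simpl; auto | constructor]].
    - exists [i; k]. repeat split; simpl; auto.
      constructor; [simpl; intros [h|h]; [congruence|auto] | constructor; [simpl; auto | constructor]]. }
  destruct HS as [Sc [HSnd [HSl [HiS HkS]]]].
  assert (XA : J (fun x => A x /\ J (fun b => lt x b /\ c x b = k /\ B b)))
    by (apply (lemX K lt J c Hid Hn A B k A B); auto).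
  assert (XB : J (fun x => B x /\ J (fun a => lt x a /\ c x a = i /\ A a)))
    by (apply (lemX K lt J c Hid Hn B A i B A); auto).
  pose (GA := fun a => A a /\ ~ J (fun b => lt a b /\ c a b = k /\ B b)).
  pose (GB := fun b => B b /\ ~ J (fun a => lt b a /\ c b a = i /\ A a)).
  assert (GAp : ~ J GA).
  { intro HG. apply HA.
    apply (ideal_down _ _ Hid A (fun x => GA x \/ (A x /\ J (fun b => lt x b /\ c x b = k /\ B b)))).
    - apply ideal_union; auto.
    - intros x Hx. destruct (classic (J (fun b => lt x b /\ c x b = k /\ B b))).
      + right; auto.
      + left; split; auto. }
  pose (H := fun x => GA x \/ GB x).
  exists H, Sc. split; [|split; [auto | split; [auto |]]].
  - apply NNPP; intro Hc. apply GAp.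
    apply (ideal_down _ _ Hid GA H (Hu H Hc)). intros x Hx; left; exact Hx.
  - intros Y HYsub HYlt.
    assert (HY : J Y).
    { apply Hu. intros [f [f1 f2]]. apply HYlt. exists f. split.
      - intros x _. apply f1. exact Logic.I.
      - intros x y _ _ e. apply f2; auto; exact Logic.I. }
    pose (E := colour_graph K lt c (fun n => In n Sc)).
    pose (R := fun a b => (H a /\ ~ Y a) /\ (H b /\ ~ Y b) /\ E a b).
    assert (Rsym : forall a b, R a b -> R b a).
    { intros a b [h1 [h2 h3]]. split; [auto | split; [auto |]].
      unfold E, colour_graph in *. destruct h3; auto. }
    assert (Eup : forall x y, lt x y -> In (c x y) Sc -> E x y).
    { intros x y h1 h2. left. auto. }
    assert (Claim1 : forall x, H x -> ~ Y x -> exists a, GA a /\ ~ Y a /\ clos_refl_trans K R x a).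
    { intros x [Hx|Hx] Hnx.
      - exists x. split; [auto | split; [auto | apply rt_refl]].
      - destruct Hx as [HxB HxN].
        pose proof (pos_minus K J Hid _ _ HxN (ideal_union K J Hid _ _ HY XA)) as HZ.
        destruct (pos_ne K J Hid _ HZ) as [a [[h1 [h2 h3]] h4]].
        assert (GAa : GA a).
        { split; [exact h3 | intro hj; apply h4; right; split; assumption]. }
        exists a. split; [auto | split; [intro; apply h4; left; auto |]].
        apply rt_step. split; [split; [right; split; auto | auto] |].
        split; [split; [left; auto | intro; apply h4; left; auto] |].
        apply Eup; auto. rewrite h2; auto. }
    assert (Claim2 : forall a a', GA a -> ~ Y a -> GA a' -> ~ Y a' -> clos_refl_trans K R a a').
    { intros a a' GAa Ya GAa' Ya'.
      destruct GAa as [Aa Na]. destruct GAa' as [Aa' Na'].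
      pose proof (pos_minus K J Hid _ _ Na (ideal_union K J Hid _ _ HY XB)) as HW.
      pose proof (pos_minus K J Hid _ _ Na' (ideal_union K J Hid _ _ HY XB)) as HW'.
      pose proof (pos_minus K J Hid _ _ HA (ideal_union K J Hid _ _ HY XA)) as HA2.
      match type of HW' with ~ J ?W' =>
      match type of HA2 with ~ J ?A2 =>
        assert (XW : J (fun v => A2 v /\ J (fun w => lt v w /\ c v w = k /\ W' w)))
          by (apply (lemX K lt J c Hid Hn A B k);
              first [assumption | intros x [[_ [_ hx]] _]; exact hx | intros x [hx _]; exact hx]);
        pose proof (pos_minus K J Hid _ _ HA2 XW) as HVs
      end end.
      match type of HW with ~ J ?W =>
      match type of HVs with ~ J ?Vs =>
        destruct (HDi W Vs) as [w [v [Hw [Hv [Hwv Hcwv]]]]];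
        [intros x [[_ [_ hx]] _]; exact hx | intros x [[hx _] _]; exact hx | exact HW | exact HVs |]
      end end.
      destruct Hw as [[w1 [w2 w3]] w4].
      destruct Hv as [[v1 v2] v3].
      assert (Hvk : ~ J (fun w' => lt v w' /\ c v w' = k /\
                     ((lt a' w' /\ c a' w' = k /\ B w') /\
                      ~ (Y w' \/ (B w' /\ J (fun a0 => lt w' a0 /\ c w' a0 = i /\ A a0)))))).
      { intro hj. apply v3. split; [split; auto | exact hj]. }
      destruct (pos_ne K J Hid _ Hvk) as [w' [u1 [u2 [[u3 [u4 u5]] u6]]]].
      assert (Vw : H w /\ ~ Y w).
      { split; [right; split; [auto | intro hj; apply w4; right; auto] | intro; apply w4; left; auto]. }
      assert (Vw' : H w' /\ ~ Y w').
      { split; [right; split; [auto | intro hj; apply u6; right; auto] | intro; apply u6; left; auto]. }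
      assert (Vv : H v /\ ~ Y v).
      { split; [left; split; [auto | intro hj; apply v2; right; auto] | intro; apply v2; left; auto]. }
      assert (Va : H a /\ ~ Y a) by (split; [left; split; auto | auto]).
      assert (Va' : H a' /\ ~ Y a') by (split; [left; split; auto | auto]).
      eapply rt_trans; [apply rt_step; split; [exact Va | split; [exact Vw | apply Eup; auto; rewrite w2; auto]] |].
      eapply rt_trans; [apply rt_step; split; [exact Vw | split; [exact Vv | apply Eup; auto; rewrite Hcwv; auto]] |].
      eapply rt_trans; [apply rt_step; split; [exact Vv | split; [exact Vw' | apply Eup; auto; rewrite u2; auto]] |].
      apply rt_step. apply Rsym. split; [exact Va' | split; [exact Vw' | apply Eup; auto; rewrite u4; auto]]. }
    intros x y Vx Vy. destruct Vx as [Hx Yx]. destruct Vy as [Hy Yy].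
    destruct (Claim1 x Hx Yx) as [ax [Gx [Yax Px]]].
    destruct (Claim1 y Hy Yy) as [ay [Gy [Yay Py]]].
    change (clos_refl_trans K R x y).
    eapply rt_trans; [exact Px |].
    eapply rt_trans; [apply Claim2; eauto | apply crt_sym; auto].
Qed.

Theorem mainTheorem6 (K : Type) (lt : K -> K -> Prop) :
  regular_uncountable_cardinal K lt ->
  (exists I : (K -> Prop) -> Prop,
      is_ideal K I /\ uniform K I /\ normal K lt I /\ two_precipitous K lt I) ->
  hc_arrow K lt 2.
Proof.
  intros _ [J [Hid [Hu [Hn H2]]]]. unfold hc_arrow. intros c.
  assert (Hfull : ~ J (fullK K)) by (destruct Hid as [_ [_ [_ h]]]; exact h).
  destruct (lemG K lt J c Hid H2 (fullK K) (fullK K) Hfull Hfull)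
    as [A1 [B1 [k [_ [_ [HA1 [HB1 HD1]]]]]]].
  destruct (lemG K lt J c Hid H2 B1 A1 HB1 HA1) as [B [A [i [HBs [HAs [HB [HA HD2]]]]]]].
  apply (crit K lt J c Hid Hn Hu A B i k HA HB); auto.
  intros A' B' h1 h2 h3 h4. apply HD1; auto.
Qed.
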